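(* Let $l\ge 2$ be an integer, $m=l^3-(l-2)^3$, and let $S_l$ be the set defined below. Then $S_l$ tiles $\mathbb{Z}^3$ by $(3m+6)\mathbb{Z}^3$, and whenever $S_l$ tiles $\mathbb{Z}^3$ by some $W$, $W$ is a translate of $(3m+6)\mathbb{Z}^3$.
   Context: Write $C_r=\{0,1,\dots,r-1\}^3$. Define $f:\{0,\dots,m+1\}^3\to\{1,\dots,m\}$ by: $f(x,y,z)=y$ if $0\le x\le m$, $1\le y\le m$, $z=0$; $f=x$ if $1\le x\le m$, $0\le y\le m$, $z=m+1$; $f=y$ if $x=0$, $1\le y\le m$, $1\le z\le m$; $f=x$ if $1\le x\le m$, $y=0$, $1\le z\le m$; $f=z$ if $1\le x\le m+1$, $1\le y\le m+1$, $1\le z\le m$; and $f=1$ at all remaining points. Let $Q_i=\{p\in\{0,\dots,m+1\}^3 : f(p)=i\}$. Set $Q_i'=3Q_i\oplus C_3$ for $2\le i\le m$, and $Q_1'=\big((3Q_1\oplus C_3)\cup\{(-1,1,1),(1,-1,1),(1,1,-1)\}\big)\setminus\{(3m+5,1,1),(1,3m+5,1),(1,1,3m+5)\}$ (here $cA=\{ca: a\in A\}$ and $A\oplus B=\{a+b: a\in A, b\in B\}$). Let $x_1,\dots,x_m$ be an enumeration of $C_l\setminus(C_{l-2}+(1,1,1))$ and $S_l=\bigcup_{i=1}^m\big(Q_i'+(3m+6)x_i\big)$. A set $P$ tiles $E$ by $W$ if $W\oplus P$ is non-overlapping (each sum arises from a unique pair) and $W\oplus P=E$. *)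

(* Defs.v *)
From Stdlib Require Import ZArith Bool.
Open Scope Z_scope.

Definition pt : Type := (Z * Z * Z)%type.

Definition padd (p q : pt) : pt :=
  let '(a, b, c) := p in let '(d, e, f) := q in (a + d, b + e, c + f).
Definition psub (p q : pt) : pt :=
  let '(a, b, c) := p in let '(d, e, f) := q in (a - d, b - e, c - f).
Definition pscale (k : Z) (p : pt) : pt :=
  let '(a, b, c) := p in (k * a, k * b, k * c).

Definition Ccube (r : Z) (p : pt) : Prop :=
  let '(a, b, c) := p in 0 <= a < r /\ 0 <= b < r /\ 0 <= c < r.

Definition mval (l : Z) : Z := l ^ 3 - (l - 2) ^ 3.

Definition box (m : Z) (p : pt) : Prop :=
  let '(a, b, c) := p in 0 <= a <= m + 1 /\ 0 <= b <= m + 1 /\ 0 <= c <= m + 1.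

(* the function f on the box (the defining cases are pairwise disjoint) *)
Definition fval (m : Z) (p : pt) : Z :=
  let '(x, y, z) := p in
  if (0 <=? x) && (x <=? m) && (1 <=? y) && (y <=? m) && (z =? 0) then y
  else if (1 <=? x) && (x <=? m) && (0 <=? y) && (y <=? m) && (z =? m + 1) then x
  else if (x =? 0) && (1 <=? y) && (y <=? m) && (1 <=? z) && (z <=? m) then y
  else if (1 <=? x) && (x <=? m) && (y =? 0) && (1 <=? z) && (z <=? m) then x
  else if (1 <=? x) && (x <=? m + 1) && (1 <=? y) && (y <=? m + 1)
          && (1 <=? z) && (z <=? m) then z
  else 1.

Definition Q (m i : Z) (p : pt) : Prop := box m p /\ fval m p = i.

Definition Q3 (m i : Z) (p : pt) : Prop :=
  exists q c, Q m i q /\ Ccube 3 c /\ p = padd (pscale 3 q) c.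

Definition Qp (m i : Z) (p : pt) : Prop :=
  if i =? 1 then
    (Q3 m 1 p \/ p = (-1, 1, 1) \/ p = (1, -1, 1) \/ p = (1, 1, -1)) /\
    p <> (3 * m + 5, 1, 1) /\ p <> (1, 3 * m + 5, 1) /\ p <> (1, 1, 3 * m + 5)
  else Q3 m i p.

Definition shell (l : Z) (p : pt) : Prop :=
  Ccube l p /\ ~ Ccube (l - 2) (psub p (1, 1, 1)).

Definition is_enum (l : Z) (x : Z -> pt) : Prop :=
  (forall i, 1 <= i <= mval l -> shell l (x i)) /\
  (forall i j, 1 <= i <= mval l -> 1 <= j <= mval l -> x i = x j -> i = j) /\
  (forall p, shell l p -> exists i, 1 <= i <= mval l /\ x i = p).

Definition S_l (l : Z) (x : Z -> pt) (p : pt) : Prop :=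
  exists i, 1 <= i <= mval l /\
    Qp (mval l) i (psub p (pscale (3 * mval l + 6) (x i))).

Definition tiles (P E W : pt -> Prop) : Prop :=
  (forall w1 w2 p1 p2, W w1 -> W w2 -> P p1 -> P p2 ->
     padd w1 p1 = padd w2 p2 -> w1 = w2 /\ p1 = p2) /\
  (forall e, E e <-> exists w p, W w /\ P p /\ e = padd w p).

Definition Zcube : pt -> Prop := fun _ => True.

Definition lattice (k : Z) (p : pt) : Prop := exists v : pt, p = pscale k v.

(* Main.v *)
Require Import Defs.
From Stdlib Require Import ZArith Lia Classical.
Open Scope Z_scope.

Lemma pt_eq (a b c d e f : Z) : a = d -> b = e -> c = f -> (a, b, c) = (d, e, f).
Proof. intros; subst; reflexivity. Qed.

Lemma pt_inj (a b c d e f : Z) : (a, b, c) = (d, e, f) -> a = d /\ b = e /\ c = f.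
Proof. intros H. inversion H. auto. Qed.

Ltac zb := repeat (first [ match goal with |- context [Z.leb ?a ?b] => destruct (Z.leb_spec a b) end
                         | match goal with |- context [Z.eqb ?a ?b] => destruct (Z.eqb_spec a b) end ]; simpl; try lia).

Lemma fval_range m a : 1 <= m -> box m a -> 1 <= fval m a <= m.
Proof. destruct a as [[a b] c]; simpl; intros. zb. Qed.

Lemma fv100 m : 1 <= m -> fval m (m+1,0,0) = 1.
Proof. intros; simpl; zb. Qed.
Lemma fv010 m : 1 <= m -> fval m (0,m+1,0) = 1.
Proof. intros; simpl; zb. Qed.
Lemma fv001 m : 1 <= m -> fval m (0,0,m+1) = 1.
Proof. intros; simpl; zb. Qed.
Lemma fv000 m : 1 <= m -> fval m (0,0,0) = 1.
Proof. intros; simpl; zb. Qed.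

Lemma coord (N a b k1 k2 : Z) : 0 < N -> -1 <= a <= N - 1 -> -1 <= b <= N - 1 ->
  a + N * k1 = b + N * k2 ->
  (k1 = k2 /\ a = b) \/ (a = -1 /\ b = N - 1 /\ k1 = k2 + 1) \/ (a = N - 1 /\ b = -1 /\ k2 = k1 + 1).
Proof. intros HN Ha Hb E.
  assert (Hd : a - b = N * (k2 - k1)) by lia.
  remember (k2 - k1) as d.
  destruct (Z_le_gt_dec d (-2)) as [H|H]; [nia|].
  destruct (Z_le_gt_dec 2 d) as [H'|H']; [nia|].
  assert (Hc : d = -1 \/ d = 0 \/ d = 1) by lia.
  destruct Hc as [Hc|[Hc|Hc]]; rewrite Hc in Hd; lia.
Qed.

Lemma psE a b c k d e f : psub (a, b, c) (pscale k (d, e, f)) = (a - k*d, b - k*e, c - k*f).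
Proof. reflexivity. Qed.

Definition Sset (m : Z) (x : Z -> pt) (p : pt) : Prop :=
  exists i, 1 <= i <= m /\ Qp m i (psub p (pscale (3 * m + 6) (x i))).

Lemma Sset_at m x i y1 y2 y3 a b c p1 p2 p3 : 1 <= i <= m -> x i = (y1, y2, y3) ->
  Qp m i (a, b, c) -> p1 = a + (3*m+6)*y1 -> p2 = b + (3*m+6)*y2 -> p3 = c + (3*m+6)*y3 ->
  Sset m x (p1, p2, p3).
Proof. intros Hi E HQ H1 H2 H3. exists i; split; auto. rewrite E, psE.
  replace (p1 - (3 * m + 6) * y1, p2 - (3 * m + 6) * y2, p3 - (3 * m + 6) * y3) with (a, b, c); auto.
  apply pt_eq; lia. Qed.

Lemma Sset_elim m x p1 p2 p3 : Sset m x (p1, p2, p3) -> exists i y1 y2 y3 a b c,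
  1 <= i <= m /\ x i = (y1, y2, y3) /\ Qp m i (a, b, c) /\
  p1 = a + (3*m+6)*y1 /\ p2 = b + (3*m+6)*y2 /\ p3 = c + (3*m+6)*y3.
Proof. intros [i [Hi HQ]]. destruct (x i) as [[y1 y2] y3] eqn:E. rewrite psE in HQ.
  exists i, y1, y2, y3, (p1 - (3 * m + 6) * y1), (p2 - (3 * m + 6) * y2), (p3 - (3 * m + 6) * y3).
  repeat split; auto; lia. Qed.

Lemma Q3_w m i a b c : Q3 m i (a, b, c) <-> exists q1 q2 q3 c1 c2 c3,
  box m (q1, q2, q3) /\ fval m (q1, q2, q3) = i /\ 0 <= c1 < 3 /\ 0 <= c2 < 3 /\ 0 <= c3 < 3 /\
  a = 3 * q1 + c1 /\ b = 3 * q2 + c2 /\ c = 3 * q3 + c3.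
Proof. split.
  - intros [[[q1 q2] q3] [[[c1 c2] c3] [[Hb Hf] [Hc E]]]]. simpl in *. apply pt_inj in E; destruct E as [? [? ?]].
    exists q1, q2, q3, c1, c2, c3. repeat split; auto; lia.
  - intros [q1 [q2 [q3 [c1 [c2 [c3 [Hb [Hf [? [? [? [? [? ?]]]]]]]]]]]]].
    exists (q1, q2, q3), (c1, c2, c3). split; [split; auto|]. split. simpl; lia.
    cbv [padd pscale]; apply pt_eq; lia. Qed.

Lemma Q3_bounds m i a b c : Q3 m i (a, b, c) -> 0 <= a <= 3*m+5 /\ 0 <= b <= 3*m+5 /\ 0 <= c <= 3*m+5.
Proof. rewrite Q3_w. intros [q1 [q2 [q3 [c1 [c2 [c3 [Hb [Hf ?]]]]]]]]. simpl in Hb. lia. Qed.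

Lemma Q3_uniq m i j p : Q3 m i p -> Q3 m j p -> i = j.
Proof. destruct p as [[a b] c]. rewrite !Q3_w.
  intros [q1 [q2 [q3 [c1 [c2 [c3 [Hb [Hf ?]]]]]]]] [r1 [r2 [r3 [d1 [d2 [d3 [Hb' [Hf' ?]]]]]]]].
  assert (q1 = r1) by lia. assert (q2 = r2) by lia. assert (q3 = r3) by lia. subst. auto. Qed.

Lemma Q3_mk m i q1 q2 q3 c1 c2 c3 a b c : box m (q1, q2, q3) -> fval m (q1, q2, q3) = i ->
  0 <= c1 < 3 -> 0 <= c2 < 3 -> 0 <= c3 < 3 ->
  a = 3 * q1 + c1 -> b = 3 * q2 + c2 -> c = 3 * q3 + c3 -> Q3 m i (a, b, c).
Proof. intros. apply Q3_w. exists q1, q2, q3, c1, c2, c3. cbv [box] in *. repeat split; auto; lia. Qed.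

Lemma Q3_E1 m j : 1 <= m -> Q3 m j (3*m+5, 1, 1) -> j = 1.
Proof. intros Hm H. rewrite Q3_w in H.
  destruct H as [q1 [q2 [q3 [c1 [c2 [c3 [Hb [Hf ?]]]]]]]].
  assert (q1 = m+1) by lia. assert (q2 = 0) by lia. assert (q3 = 0) by lia. subst q1 q2 q3.
  rewrite fv100 in Hf; auto. Qed.
Lemma Q3_E2 m j : 1 <= m -> Q3 m j (1, 3*m+5, 1) -> j = 1.
Proof. intros Hm H. rewrite Q3_w in H.
  destruct H as [q1 [q2 [q3 [c1 [c2 [c3 [Hb [Hf ?]]]]]]]].
  assert (q1 = 0) by lia. assert (q2 = m+1) by lia. assert (q3 = 0) by lia. subst q1 q2 q3.
  rewrite fv010 in Hf; auto. Qed.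
Lemma Q3_E3 m j : 1 <= m -> Q3 m j (1, 1, 3*m+5) -> j = 1.
Proof. intros Hm H. rewrite Q3_w in H.
  destruct H as [q1 [q2 [q3 [c1 [c2 [c3 [Hb [Hf ?]]]]]]]].
  assert (q1 = 0) by lia. assert (q2 = 0) by lia. assert (q3 = m+1) by lia. subst q1 q2 q3.
  rewrite fv001 in Hf; auto. Qed.

Definition isE m a b c := (a = 3*m+5 /\ b = 1 /\ c = 1) \/ (a = 1 /\ b = 3*m+5 /\ c = 1) \/ (a = 1 /\ b = 1 /\ c = 3*m+5).
Definition isB a b c := (a = -1 /\ b = 1 /\ c = 1) \/ (a = 1 /\ b = -1 /\ c = 1) \/ (a = 1 /\ b = 1 /\ c = -1).

Lemma Qp_cases m i a b c : Qp m i (a, b, c) ->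
  (i = 1 /\ isB a b c) \/ (Q3 m i (a, b, c) /\ (i = 1 -> ~ isE m a b c)).
Proof. unfold Qp. destruct (Z.eqb_spec i 1).
  - intros [[H|[H|[H|H]]] [N1 [N2 N3]]].
    + right. subst i. split; auto. intros _ HE; unfold isE in HE. destruct HE as [E|[E|E]]; destruct E as [-> [-> ->]]; congruence.
    + left; split; auto. apply pt_inj in H; destruct H as [? [? ?]]; unfold isB; lia.
    + left; split; auto. apply pt_inj in H; destruct H as [? [? ?]]; unfold isB; lia.
    + left; split; auto. apply pt_inj in H; destruct H as [? [? ?]]; unfold isB; lia.
  - intros; right; split; auto; lia. Qed.

Lemma Qp_mk_Q3 m i a b c : Q3 m i (a, b, c) -> (i = 1 -> ~ isE m a b c) -> Qp m i (a, b, c).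
Proof. intros HQ HE. unfold Qp. destruct (Z.eqb_spec i 1) as [e|e]; [|exact HQ].
  assert (HE' : ~ isE m a b c) by (apply HE; exact e). clear HE. unfold isE in HE'. subst i. split; [left; exact HQ|].
  repeat split; intro E; apply pt_inj in E; destruct E as [? [? ?]]; apply HE'; lia. Qed.

Lemma Qp_mk_B m a b c : 1 <= m -> isB a b c -> Qp m 1 (a, b, c).
Proof. intros Hm HB. unfold Qp. rewrite Z.eqb_refl.
  unfold isB in HB. split.
  - right. destruct HB as [[-> [-> ->]]|[[-> [-> ->]]|[-> [-> ->]]]]; auto.
  - repeat split; intro E; apply pt_inj in E; destruct E as [? [? ?]]; lia. Qed.

Lemma Q3_notB m i a b c : Q3 m i (a, b, c) -> ~ isB a b c.
Proof. intros H. apply Q3_bounds in H. unfold isB; lia. Qed.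

Lemma Qp_bounds m i a b c : 1 <= m -> Qp m i (a, b, c) ->
  -1 <= a <= 3*m+5 /\ -1 <= b <= 3*m+5 /\ -1 <= c <= 3*m+5.
Proof. intros Hm H. apply Qp_cases in H as [[_ HB]|[HQ _]].
  unfold isB in HB; lia. apply Q3_bounds in HQ; lia. Qed.

Lemma nb_x m i a b c : Q3 m i (a, b, c) -> exists d, (d = 1 \/ d = -1) /\ Q3 m i (a + d, b, c).
Proof. rewrite Q3_w. intros [q1 [q2 [q3 [c1 [c2 [c3 [Hb [Hf [? [? [? [? [? ?]]]]]]]]]]]]].
  destruct (Z.eq_dec c1 0).
  - exists 1; split; auto. apply (Q3_mk m i q1 q2 q3 (c1+1) c2 c3); auto; lia.
  - exists (-1); split; auto. apply (Q3_mk m i q1 q2 q3 (c1-1) c2 c3); auto; lia. Qed.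
Lemma nb_y m i a b c : Q3 m i (a, b, c) -> exists d, (d = 1 \/ d = -1) /\ Q3 m i (a, b + d, c).
Proof. rewrite Q3_w. intros [q1 [q2 [q3 [c1 [c2 [c3 [Hb [Hf [? [? [? [? [? ?]]]]]]]]]]]]].
  destruct (Z.eq_dec c2 0).
  - exists 1; split; auto. apply (Q3_mk m i q1 q2 q3 c1 (c2+1) c3); auto; lia.
  - exists (-1); split; auto. apply (Q3_mk m i q1 q2 q3 c1 (c2-1) c3); auto; lia. Qed.
Lemma nb_z m i a b c : Q3 m i (a, b, c) -> exists d, (d = 1 \/ d = -1) /\ Q3 m i (a, b, c + d).
Proof. rewrite Q3_w. intros [q1 [q2 [q3 [c1 [c2 [c3 [Hb [Hf [? [? [? [? [? ?]]]]]]]]]]]]].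
  destruct (Z.eq_dec c3 0).
  - exists 1; split; auto. apply (Q3_mk m i q1 q2 q3 c1 c2 (c3+1)); auto; lia.
  - exists (-1); split; auto. apply (Q3_mk m i q1 q2 q3 c1 c2 (c3-1)); auto; lia. Qed.

Lemma Q3_nb_yz m i a b c : 1 <= m -> Q3 m i (a, b, c) -> (i = 1 -> ~ isE m a b c) ->
  exists u2 u3, Qp m i (a, b + u2, c + u3) /\
   ((u2 = 0 /\ (u3 = 1 \/ u3 = -1)) \/ (u3 = 0 /\ (u2 = 1 \/ u2 = -1))).
Proof. intros Hm HQ HE.
  destruct (nb_y _ _ _ _ _ HQ) as [dy [Hdy Hy]]. destruct (nb_z _ _ _ _ _ HQ) as [dz [Hdz Hz]].
  destruct (classic (i = 1 /\ isE m a (b + dy) c)) as [Hc|Hc].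
  - exists 0, dz. rewrite Z.add_0_r. split; [|lia]. apply Qp_mk_Q3; auto.
    intros _ HE'. unfold isE in *. lia.
  - exists dy, 0. rewrite Z.add_0_r. split; [|lia]. apply Qp_mk_Q3; auto. Qed.
Lemma Q3_nb_xz m i a b c : 1 <= m -> Q3 m i (a, b, c) -> (i = 1 -> ~ isE m a b c) ->
  exists u1 u3, Qp m i (a + u1, b, c + u3) /\
   ((u1 = 0 /\ (u3 = 1 \/ u3 = -1)) \/ (u3 = 0 /\ (u1 = 1 \/ u1 = -1))).
Proof. intros Hm HQ HE.
  destruct (nb_x _ _ _ _ _ HQ) as [dy [Hdy Hy]]. destruct (nb_z _ _ _ _ _ HQ) as [dz [Hdz Hz]].
  destruct (classic (i = 1 /\ isE m (a + dy) b c)) as [Hc|Hc].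
  - exists 0, dz. rewrite Z.add_0_r. split; [|lia]. apply Qp_mk_Q3; auto.
    intros _ HE'. unfold isE in *. lia.
  - exists dy, 0. rewrite Z.add_0_r. split; [|lia]. apply Qp_mk_Q3; auto. Qed.
Lemma Q3_nb_xy m i a b c : 1 <= m -> Q3 m i (a, b, c) -> (i = 1 -> ~ isE m a b c) ->
  exists u1 u2, Qp m i (a + u1, b + u2, c) /\
   ((u1 = 0 /\ (u2 = 1 \/ u2 = -1)) \/ (u2 = 0 /\ (u1 = 1 \/ u1 = -1))).
Proof. intros Hm HQ HE.
  destruct (nb_x _ _ _ _ _ HQ) as [dy [Hdy Hy]]. destruct (nb_y _ _ _ _ _ HQ) as [dz [Hdz Hz]].
  destruct (classic (i = 1 /\ isE m (a + dy) b c)) as [Hc|Hc].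
  - exists 0, dz. rewrite Z.add_0_r. split; [|lia]. apply Qp_mk_Q3; auto.
    intros _ HE'. unfold isE in *. lia.
  - exists dy, 0. rewrite Z.add_0_r. split; [|lia]. apply Qp_mk_Q3; auto. Qed.

Lemma Qp1_base m a b c : 1 <= m -> 0 <= a < 3 -> 0 <= b < 3 -> 0 <= c < 3 -> Qp m 1 (a, b, c).
Proof. intros. apply Qp_mk_Q3.
  - apply (Q3_mk m 1 0 0 0 a b c); try (cbv [box]; lia); try lia. apply fv000; auto.
  - intros _ HE; unfold isE in HE; lia. Qed.
Lemma Qp1_cx m a b c : 1 <= m -> 3*m+3 <= a <= 3*m+5 -> 0 <= b < 3 -> 0 <= c < 3 ->
  ~ (a = 3*m+5 /\ b = 1 /\ c = 1) -> Qp m 1 (a, b, c).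
Proof. intros. apply Qp_mk_Q3.
  - apply (Q3_mk m 1 (m+1) 0 0 (a - 3*m-3) b c); try (cbv [box]; lia); try lia. apply fv100; auto.
  - intros _ HE; unfold isE in HE; lia. Qed.
Lemma Qp1_cy m a b c : 1 <= m -> 0 <= a < 3 -> 3*m+3 <= b <= 3*m+5 -> 0 <= c < 3 ->
  ~ (a = 1 /\ b = 3*m+5 /\ c = 1) -> Qp m 1 (a, b, c).
Proof. intros. apply Qp_mk_Q3.
  - apply (Q3_mk m 1 0 (m+1) 0 a (b - 3*m-3) c); try (cbv [box]; lia); try lia. apply fv010; auto.
  - intros _ HE; unfold isE in HE; lia. Qed.
Lemma Qp1_cz m a b c : 1 <= m -> 0 <= a < 3 -> 0 <= b < 3 -> 3*m+3 <= c <= 3*m+5 ->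
  ~ (a = 1 /\ b = 1 /\ c = 3*m+5) -> Qp m 1 (a, b, c).
Proof. intros. apply Qp_mk_Q3.
  - apply (Q3_mk m 1 0 0 (m+1) a b (c - 3*m-3)); try (cbv [box]; lia); try lia. apply fv001; auto.
  - intros _ HE; unfold isE in HE; lia. Qed.

Lemma no_nb_x m x s1 s2 s3 : 1 <= m -> Sset m x (s1, s2, s3) ->
  ~ Sset m x (s1 - 1, s2, s3) -> ~ Sset m x (s1, s2 + 1, s3) -> ~ Sset m x (s1, s2 - 1, s3) ->
  ~ Sset m x (s1, s2, s3 + 1) -> ~ Sset m x (s1, s2, s3 - 1) ->
  exists y1 y2 y3, x 1 = (y1, y2, y3) /\ s1 = -1 + (3*m+6)*y1 /\ s2 = 1 + (3*m+6)*y2 /\ s3 = 1 + (3*m+6)*y3.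
Proof. intros Hm HS H1 H2 H3 H4 H5.
  destruct (Sset_elim _ _ _ _ _ HS) as [i [y1 [y2 [y3 [a [b [c [Hi [Ex [HQ [E1 [E2 E3]]]]]]]]]]]].
  destruct (Qp_cases _ _ _ _ _ HQ) as [[-> HB]|[HQ3 HE]].
  - unfold isB in HB. destruct HB as [[-> [-> ->]]|[[-> [-> ->]]|[-> [-> ->]]]].
    + exists y1, y2, y3. split; [exact Ex|lia].
    + exfalso; apply H2. apply (Sset_at m x 1 y1 y2 y3 1 0 1); auto; try lia. apply Qp1_base; lia.
    + exfalso; apply H4. apply (Sset_at m x 1 y1 y2 y3 1 1 0); auto; try lia. apply Qp1_base; lia.
  - exfalso. destruct (Q3_nb_yz m i a b c Hm HQ3 HE) as [u2 [u3 [HQ' Hu]]].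
    destruct Hu as [[-> [-> | ->]] | [-> [-> | ->]]].
    + apply H4; apply (Sset_at m x i y1 y2 y3 _ _ _ _ _ _ Hi Ex HQ'); lia.
    + apply H5; apply (Sset_at m x i y1 y2 y3 _ _ _ _ _ _ Hi Ex HQ'); lia.
    + apply H2; apply (Sset_at m x i y1 y2 y3 _ _ _ _ _ _ Hi Ex HQ'); lia.
    + apply H3; apply (Sset_at m x i y1 y2 y3 _ _ _ _ _ _ Hi Ex HQ'); lia.
Qed.

Lemma no_nb_y m x s1 s2 s3 : 1 <= m -> Sset m x (s1, s2, s3) ->
  ~ Sset m x (s1 + 1, s2, s3) -> ~ Sset m x (s1 - 1, s2, s3) -> ~ Sset m x (s1, s2 - 1, s3) ->
  ~ Sset m x (s1, s2, s3 + 1) -> ~ Sset m x (s1, s2, s3 - 1) ->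
  exists y1 y2 y3, x 1 = (y1, y2, y3) /\ s1 = 1 + (3*m+6)*y1 /\ s2 = -1 + (3*m+6)*y2 /\ s3 = 1 + (3*m+6)*y3.
Proof. intros Hm HS H1 H2 H3 H4 H5.
  destruct (Sset_elim _ _ _ _ _ HS) as [i [y1 [y2 [y3 [a [b [c [Hi [Ex [HQ [E1 [E2 E3]]]]]]]]]]]].
  destruct (Qp_cases _ _ _ _ _ HQ) as [[-> HB]|[HQ3 HE]].
  - unfold isB in HB. destruct HB as [[-> [-> ->]]|[[-> [-> ->]]|[-> [-> ->]]]].
    + exfalso; apply H1. apply (Sset_at m x 1 y1 y2 y3 0 1 1); auto; try lia. apply Qp1_base; lia.
    + exists y1, y2, y3. split; [exact Ex|lia].
    + exfalso; apply H4. apply (Sset_at m x 1 y1 y2 y3 1 1 0); auto; try lia. apply Qp1_base; lia.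
  - exfalso. destruct (Q3_nb_xz m i a b c Hm HQ3 HE) as [u1 [u3 [HQ' Hu]]].
    destruct Hu as [[-> [-> | ->]] | [-> [-> | ->]]].
    + apply H4; apply (Sset_at m x i y1 y2 y3 _ _ _ _ _ _ Hi Ex HQ'); lia.
    + apply H5; apply (Sset_at m x i y1 y2 y3 _ _ _ _ _ _ Hi Ex HQ'); lia.
    + apply H1; apply (Sset_at m x i y1 y2 y3 _ _ _ _ _ _ Hi Ex HQ'); lia.
    + apply H2; apply (Sset_at m x i y1 y2 y3 _ _ _ _ _ _ Hi Ex HQ'); lia.
Qed.

Lemma no_nb_z m x s1 s2 s3 : 1 <= m -> Sset m x (s1, s2, s3) ->
  ~ Sset m x (s1 + 1, s2, s3) -> ~ Sset m x (s1 - 1, s2, s3) -> ~ Sset m x (s1, s2 + 1, s3) ->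
  ~ Sset m x (s1, s2 - 1, s3) -> ~ Sset m x (s1, s2, s3 - 1) ->
  exists y1 y2 y3, x 1 = (y1, y2, y3) /\ s1 = 1 + (3*m+6)*y1 /\ s2 = 1 + (3*m+6)*y2 /\ s3 = -1 + (3*m+6)*y3.
Proof. intros Hm HS H1 H2 H3 H4 H5.
  destruct (Sset_elim _ _ _ _ _ HS) as [i [y1 [y2 [y3 [a [b [c [Hi [Ex [HQ [E1 [E2 E3]]]]]]]]]]]].
  destruct (Qp_cases _ _ _ _ _ HQ) as [[-> HB]|[HQ3 HE]].
  - unfold isB in HB. destruct HB as [[-> [-> ->]]|[[-> [-> ->]]|[-> [-> ->]]]].
    + exfalso; apply H1. apply (Sset_at m x 1 y1 y2 y3 0 1 1); auto; try lia. apply Qp1_base; lia.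
    + exfalso; apply H3. apply (Sset_at m x 1 y1 y2 y3 1 0 1); auto; try lia. apply Qp1_base; lia.
    + exists y1, y2, y3. split; [exact Ex|lia].
  - exfalso. destruct (Q3_nb_xy m i a b c Hm HQ3 HE) as [u1 [u2 [HQ' Hu]]].
    destruct Hu as [[-> [-> | ->]] | [-> [-> | ->]]].
    + apply H3; apply (Sset_at m x i y1 y2 y3 _ _ _ _ _ _ Hi Ex HQ'); lia.
    + apply H4; apply (Sset_at m x i y1 y2 y3 _ _ _ _ _ _ Hi Ex HQ'); lia.
    + apply H1; apply (Sset_at m x i y1 y2 y3 _ _ _ _ _ _ Hi Ex HQ'); lia.
    + apply H2; apply (Sset_at m x i y1 y2 y3 _ _ _ _ _ _ Hi Ex HQ'); lia.
Qed.

Lemma Qp_E1_false m j : 1 <= m -> ~ Qp m j (3*m+5, 1, 1).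
Proof. intros Hm HQ. destruct (Qp_cases _ _ _ _ _ HQ) as [[_ HB]|[HQ3 HE]].
  unfold isB in HB; lia. pose proof (Q3_E1 _ _ Hm HQ3). apply (HE H). unfold isE; lia. Qed.
Lemma Qp_E2_false m j : 1 <= m -> ~ Qp m j (1, 3*m+5, 1).
Proof. intros Hm HQ. destruct (Qp_cases _ _ _ _ _ HQ) as [[_ HB]|[HQ3 HE]].
  unfold isB in HB; lia. pose proof (Q3_E2 _ _ Hm HQ3). apply (HE H). unfold isE; lia. Qed.
Lemma Qp_E3_false m j : 1 <= m -> ~ Qp m j (1, 1, 3*m+5).
Proof. intros Hm HQ. destruct (Qp_cases _ _ _ _ _ HQ) as [[_ HB]|[HQ3 HE]].
  unfold isB in HB; lia. pose proof (Q3_E3 _ _ Hm HQ3). apply (HE H). unfold isE; lia. Qed.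

Lemma Qp_neg m i a b c : Qp m i (a, b, c) -> a = -1 \/ b = -1 \/ c = -1 -> i = 1 /\ isB a b c.
Proof. intros HQ Hn. destruct (Qp_cases _ _ _ _ _ HQ) as [H|[HQ3 _]]; auto.
  apply Q3_bounds in HQ3. lia. Qed.

Lemma Qp_uniq m i j p : Qp m i p -> Qp m j p -> i = j.
Proof. destruct p as [[a b] c]. intros H1 H2.
  destruct (Qp_cases _ _ _ _ _ H1) as [[-> HB]|[HQ3 _]];
  destruct (Qp_cases _ _ _ _ _ H2) as [[-> HB']|[HQ3' _]]; auto.
  - exfalso; exact (Q3_notB _ _ _ _ _ HQ3' HB).
  - exfalso; exact (Q3_notB _ _ _ _ _ HQ3 HB').
  - exact (Q3_uniq _ _ _ _ HQ3 HQ3'). Qed.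

Lemma dent_x m x y1 y2 y3 : 1 <= m -> x 1 = (y1, y2, y3) ->
  ~ Sset m x (3*m+5 + (3*m+6)*y1, 1 + (3*m+6)*y2, 1 + (3*m+6)*y3).
Proof. intros Hm Ex HS.
  destruct (Sset_elim _ _ _ _ _ HS) as [j [z1 [z2 [z3 [a [b [c [Hj [Ez [HQ [E1 [E2 E3]]]]]]]]]]]].
  pose proof (Qp_bounds _ _ _ _ _ Hm HQ) as Hb.
  destruct (coord (3*m+6) a (3*m+5) z1 y1) as [[? ?]|[[? ?]|[? ?]]]; try lia;
  destruct (coord (3*m+6) b 1 z2 y2) as [[? ?]|[[? ?]|[? ?]]]; try lia;
  destruct (coord (3*m+6) c 1 z3 y3) as [[? ?]|[[? ?]|[? ?]]]; try lia; subst a b c.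
  - exact (Qp_E1_false _ _ Hm HQ).
  - destruct (Qp_neg _ _ _ _ _ HQ) as [-> _]; [lia|]. rewrite Ex in Ez. apply pt_inj in Ez. lia.
Qed.
Lemma dent_y m x y1 y2 y3 : 1 <= m -> x 1 = (y1, y2, y3) ->
  ~ Sset m x (1 + (3*m+6)*y1, 3*m+5 + (3*m+6)*y2, 1 + (3*m+6)*y3).
Proof. intros Hm Ex HS.
  destruct (Sset_elim _ _ _ _ _ HS) as [j [z1 [z2 [z3 [a [b [c [Hj [Ez [HQ [E1 [E2 E3]]]]]]]]]]]].
  pose proof (Qp_bounds _ _ _ _ _ Hm HQ) as Hb.
  destruct (coord (3*m+6) a 1 z1 y1) as [[? ?]|[[? ?]|[? ?]]]; try lia;
  destruct (coord (3*m+6) b (3*m+5) z2 y2) as [[? ?]|[[? ?]|[? ?]]]; try lia;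
  destruct (coord (3*m+6) c 1 z3 y3) as [[? ?]|[[? ?]|[? ?]]]; try lia; subst a b c.
  - exact (Qp_E2_false _ _ Hm HQ).
  - destruct (Qp_neg _ _ _ _ _ HQ) as [-> _]; [lia|]. rewrite Ex in Ez. apply pt_inj in Ez. lia.
Qed.
Lemma dent_z m x y1 y2 y3 : 1 <= m -> x 1 = (y1, y2, y3) ->
  ~ Sset m x (1 + (3*m+6)*y1, 1 + (3*m+6)*y2, 3*m+5 + (3*m+6)*y3).
Proof. intros Hm Ex HS.
  destruct (Sset_elim _ _ _ _ _ HS) as [j [z1 [z2 [z3 [a [b [c [Hj [Ez [HQ [E1 [E2 E3]]]]]]]]]]]].
  pose proof (Qp_bounds _ _ _ _ _ Hm HQ) as Hb.
  destruct (coord (3*m+6) a 1 z1 y1) as [[? ?]|[[? ?]|[? ?]]]; try lia;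
  destruct (coord (3*m+6) b 1 z2 y2) as [[? ?]|[[? ?]|[? ?]]]; try lia;
  destruct (coord (3*m+6) c (3*m+5) z3 y3) as [[? ?]|[[? ?]|[? ?]]]; try lia; subst a b c.
  - exact (Qp_E3_false _ _ Hm HQ).
  - destruct (Qp_neg _ _ _ _ _ HQ) as [-> _]; [lia|]. rewrite Ex in Ez. apply pt_inj in Ez. lia.
Qed.

Lemma blk (S W : pt -> Prop) v1 v2 v3 w1 w2 w3 s1 s2 s3 e1 e2 e3 p1 p2 p3 q1 q2 q3 :
  (forall a b p q, W a -> W b -> S p -> S q -> padd a p = padd b q -> a = b /\ p = q) ->
  W (v1, v2, v3) -> W (w1, w2, w3) -> S (p1, p2, p3) -> S (q1, q2, q3) ->
  v1 + s1 = w1 + e1 -> v2 + s2 = w2 + e2 -> v3 + s3 = w3 + e3 ->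
  p1 - s1 = q1 - e1 -> p2 - s2 = q2 - e2 -> p3 - s3 = q3 - e3 ->
  ~ S (e1, e2, e3) -> S (s1, s2, s3) -> False.
Proof. intros Hno HV HW HP HQ ? ? ? ? ? ? HnE HS.
  destruct (Hno _ _ _ _ HV HW HP HQ) as [Ev Ep].
  - cbv [padd]; apply pt_eq; lia.
  - apply pt_inj in Ev; apply pt_inj in Ep. apply HnE.
    replace (e1, e2, e3) with (s1, s2, s3); auto. apply pt_eq; lia. Qed.

Definition nonov (S W : pt -> Prop) :=
  forall a b p q, W a -> W b -> S p -> S q -> padd a p = padd b q -> a = b /\ p = q.
Definition cov (S W : pt -> Prop) :=
  forall e : pt, exists w p, W w /\ S p /\ e = padd w p.

Lemma step_x m x W : 1 <= m -> nonov (Sset m x) W -> cov (Sset m x) W ->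
  forall w1 w2 w3, W (w1, w2, w3) -> W (w1 + (3*m+6), w2, w3).
Proof. intros Hm Hno Hcov w1 w2 w3 HW.
  destruct (x 1) as [[y1 y2] y3] eqn:Ex.
  destruct (Hcov (w1 + (3*m+5 + (3*m+6)*y1), w2 + (1 + (3*m+6)*y2), w3 + (1 + (3*m+6)*y3)))
    as [[[v1 v2] v3] [[[s1 s2] s3] [HV [HS Ed]]]].
  cbv [padd] in Ed. apply pt_inj in Ed. destruct Ed as [D1 [D2 D3]].
  pose proof (dent_x m x y1 y2 y3 Hm Ex) as Hd.
  destruct (no_nb_x m x s1 s2 s3 Hm HS) as [z1 [z2 [z3 [Ez [F1 [F2 F3]]]]]].
  - intro Hp. eapply (blk (Sset m x) W v1 v2 v3 w1 w2 w3 s1 s2 s3 _ _ _ _ _ _ (3*m+4 + (3*m+6)*y1) (1 + (3*m+6)*y2) (1 + (3*m+6)*y3) Hno HV HW Hp); try eassumption; try lia.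
    apply (Sset_at m x 1 y1 y2 y3 (3*m+4) 1 1); auto; try lia. apply Qp1_cx; lia.
  - intro Hp. eapply (blk (Sset m x) W v1 v2 v3 w1 w2 w3 s1 s2 s3 _ _ _ _ _ _ (3*m+5 + (3*m+6)*y1) (2 + (3*m+6)*y2) (1 + (3*m+6)*y3) Hno HV HW Hp); try eassumption; try lia.
    apply (Sset_at m x 1 y1 y2 y3 (3*m+5) 2 1); auto; try lia. apply Qp1_cx; lia.
  - intro Hp. eapply (blk (Sset m x) W v1 v2 v3 w1 w2 w3 s1 s2 s3 _ _ _ _ _ _ (3*m+5 + (3*m+6)*y1) (0 + (3*m+6)*y2) (1 + (3*m+6)*y3) Hno HV HW Hp); try eassumption; try lia.
    apply (Sset_at m x 1 y1 y2 y3 (3*m+5) 0 1); auto; try lia. apply Qp1_cx; lia.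
  - intro Hp. eapply (blk (Sset m x) W v1 v2 v3 w1 w2 w3 s1 s2 s3 _ _ _ _ _ _ (3*m+5 + (3*m+6)*y1) (1 + (3*m+6)*y2) (2 + (3*m+6)*y3) Hno HV HW Hp); try eassumption; try lia.
    apply (Sset_at m x 1 y1 y2 y3 (3*m+5) 1 2); auto; try lia. apply Qp1_cx; lia.
  - intro Hp. eapply (blk (Sset m x) W v1 v2 v3 w1 w2 w3 s1 s2 s3 _ _ _ _ _ _ (3*m+5 + (3*m+6)*y1) (1 + (3*m+6)*y2) (0 + (3*m+6)*y3) Hno HV HW Hp); try eassumption; try lia.
    apply (Sset_at m x 1 y1 y2 y3 (3*m+5) 1 0); auto; try lia. apply Qp1_cx; lia.
  - rewrite Ex in Ez. apply pt_inj in Ez. destruct Ez as [-> [-> ->]].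
    replace (w1 + (3*m+6), w2, w3) with (v1, v2, v3); auto. apply pt_eq; lia.
Qed.

Lemma step_y m x W : 1 <= m -> nonov (Sset m x) W -> cov (Sset m x) W ->
  forall w1 w2 w3, W (w1, w2, w3) -> W (w1, w2 + (3*m+6), w3).
Proof. intros Hm Hno Hcov w1 w2 w3 HW.
  destruct (x 1) as [[y1 y2] y3] eqn:Ex.
  destruct (Hcov (w1 + (1 + (3*m+6)*y1), w2 + (3*m+5 + (3*m+6)*y2), w3 + (1 + (3*m+6)*y3)))
    as [[[v1 v2] v3] [[[s1 s2] s3] [HV [HS Ed]]]].
  cbv [padd] in Ed. apply pt_inj in Ed. destruct Ed as [D1 [D2 D3]].
  pose proof (dent_y m x y1 y2 y3 Hm Ex) as Hd.
  destruct (no_nb_y m x s1 s2 s3 Hm HS) as [z1 [z2 [z3 [Ez [F1 [F2 F3]]]]]].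
  - intro Hp. eapply (blk (Sset m x) W v1 v2 v3 w1 w2 w3 s1 s2 s3 _ _ _ _ _ _ (2 + (3*m+6)*y1) (3*m+5 + (3*m+6)*y2) (1 + (3*m+6)*y3) Hno HV HW Hp); try eassumption; try lia.
    apply (Sset_at m x 1 y1 y2 y3 (2) (3*m+5) (1)); auto; try lia. apply Qp1_cy; lia.
  - intro Hp. eapply (blk (Sset m x) W v1 v2 v3 w1 w2 w3 s1 s2 s3 _ _ _ _ _ _ (0 + (3*m+6)*y1) (3*m+5 + (3*m+6)*y2) (1 + (3*m+6)*y3) Hno HV HW Hp); try eassumption; try lia.
    apply (Sset_at m x 1 y1 y2 y3 (0) (3*m+5) (1)); auto; try lia. apply Qp1_cy; lia.
  - intro Hp. eapply (blk (Sset m x) W v1 v2 v3 w1 w2 w3 s1 s2 s3 _ _ _ _ _ _ (1 + (3*m+6)*y1) (3*m+4 + (3*m+6)*y2) (1 + (3*m+6)*y3) Hno HV HW Hp); try eassumption; try lia.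
    apply (Sset_at m x 1 y1 y2 y3 (1) (3*m+4) (1)); auto; try lia. apply Qp1_cy; lia.
  - intro Hp. eapply (blk (Sset m x) W v1 v2 v3 w1 w2 w3 s1 s2 s3 _ _ _ _ _ _ (1 + (3*m+6)*y1) (3*m+5 + (3*m+6)*y2) (2 + (3*m+6)*y3) Hno HV HW Hp); try eassumption; try lia.
    apply (Sset_at m x 1 y1 y2 y3 (1) (3*m+5) (2)); auto; try lia. apply Qp1_cy; lia.
  - intro Hp. eapply (blk (Sset m x) W v1 v2 v3 w1 w2 w3 s1 s2 s3 _ _ _ _ _ _ (1 + (3*m+6)*y1) (3*m+5 + (3*m+6)*y2) (0 + (3*m+6)*y3) Hno HV HW Hp); try eassumption; try lia.
    apply (Sset_at m x 1 y1 y2 y3 (1) (3*m+5) (0)); auto; try lia. apply Qp1_cy; lia.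
  - rewrite Ex in Ez. apply pt_inj in Ez. destruct Ez as [-> [-> ->]].
    replace (w1, w2 + (3*m+6), w3) with (v1, v2, v3); auto. apply pt_eq; lia.
Qed.

Lemma step_z m x W : 1 <= m -> nonov (Sset m x) W -> cov (Sset m x) W ->
  forall w1 w2 w3, W (w1, w2, w3) -> W (w1, w2, w3 + (3*m+6)).
Proof. intros Hm Hno Hcov w1 w2 w3 HW.
  destruct (x 1) as [[y1 y2] y3] eqn:Ex.
  destruct (Hcov (w1 + (1 + (3*m+6)*y1), w2 + (1 + (3*m+6)*y2), w3 + (3*m+5 + (3*m+6)*y3)))
    as [[[v1 v2] v3] [[[s1 s2] s3] [HV [HS Ed]]]].
  cbv [padd] in Ed. apply pt_inj in Ed. destruct Ed as [D1 [D2 D3]].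
  pose proof (dent_z m x y1 y2 y3 Hm Ex) as Hd.
  destruct (no_nb_z m x s1 s2 s3 Hm HS) as [z1 [z2 [z3 [Ez [F1 [F2 F3]]]]]].
  - intro Hp. eapply (blk (Sset m x) W v1 v2 v3 w1 w2 w3 s1 s2 s3 _ _ _ _ _ _ (2 + (3*m+6)*y1) (1 + (3*m+6)*y2) (3*m+5 + (3*m+6)*y3) Hno HV HW Hp); try eassumption; try lia.
    apply (Sset_at m x 1 y1 y2 y3 (2) (1) (3*m+5)); auto; try lia. apply Qp1_cz; lia.
  - intro Hp. eapply (blk (Sset m x) W v1 v2 v3 w1 w2 w3 s1 s2 s3 _ _ _ _ _ _ (0 + (3*m+6)*y1) (1 + (3*m+6)*y2) (3*m+5 + (3*m+6)*y3) Hno HV HW Hp); try eassumption; try lia.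
    apply (Sset_at m x 1 y1 y2 y3 (0) (1) (3*m+5)); auto; try lia. apply Qp1_cz; lia.
  - intro Hp. eapply (blk (Sset m x) W v1 v2 v3 w1 w2 w3 s1 s2 s3 _ _ _ _ _ _ (1 + (3*m+6)*y1) (2 + (3*m+6)*y2) (3*m+5 + (3*m+6)*y3) Hno HV HW Hp); try eassumption; try lia.
    apply (Sset_at m x 1 y1 y2 y3 (1) (2) (3*m+5)); auto; try lia. apply Qp1_cz; lia.
  - intro Hp. eapply (blk (Sset m x) W v1 v2 v3 w1 w2 w3 s1 s2 s3 _ _ _ _ _ _ (1 + (3*m+6)*y1) (0 + (3*m+6)*y2) (3*m+5 + (3*m+6)*y3) Hno HV HW Hp); try eassumption; try lia.
    apply (Sset_at m x 1 y1 y2 y3 (1) (0) (3*m+5)); auto; try lia. apply Qp1_cz; lia.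
  - intro Hp. eapply (blk (Sset m x) W v1 v2 v3 w1 w2 w3 s1 s2 s3 _ _ _ _ _ _ (1 + (3*m+6)*y1) (1 + (3*m+6)*y2) (3*m+4 + (3*m+6)*y3) Hno HV HW Hp); try eassumption; try lia.
    apply (Sset_at m x 1 y1 y2 y3 (1) (1) (3*m+4)); auto; try lia. apply Qp1_cz; lia.
  - rewrite Ex in Ez. apply pt_inj in Ez. destruct Ez as [-> [-> ->]].
    replace (w1, w2, w3 + (3*m+6)) with (v1, v2, v3); auto. apply pt_eq; lia.
Qed.

Lemma neg_step (S W : pt -> Prop) d1 d2 d3 : nonov S W -> cov S W -> (exists s0, S s0) ->
  (forall w1 w2 w3, W (w1, w2, w3) -> W (w1 + d1, w2 + d2, w3 + d3)) ->
  forall w1 w2 w3, W (w1, w2, w3) -> W (w1 - d1, w2 - d2, w3 - d3).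
Proof. intros Hno Hcov [[[t1 t2] t3] Hs0] Hst w1 w2 w3 HW.
  destruct (Hcov (w1 - d1 + t1, w2 - d2 + t2, w3 - d3 + t3)) as [[[v1 v2] v3] [[[s1 s2] s3] [HV [HS E]]]].
  cbv [padd] in E. apply pt_inj in E.
  pose proof (Hst _ _ _ HV) as HV'.
  destruct (Hno _ _ _ _ HV' HW HS Hs0) as [Ev _].
  - cbv [padd]. apply pt_eq; lia.
  - apply pt_inj in Ev. replace (w1 - d1, w2 - d2, w3 - d3) with (v1, v2, v3); auto. apply pt_eq; lia.
Qed.

Lemma z_step (W : pt -> Prop) d1 d2 d3 :
  (forall w1 w2 w3, W (w1, w2, w3) -> W (w1 + d1, w2 + d2, w3 + d3)) ->
  (forall w1 w2 w3, W (w1, w2, w3) -> W (w1 - d1, w2 - d2, w3 - d3)) ->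
  forall k w1 w2 w3, W (w1, w2, w3) -> W (w1 + k * d1, w2 + k * d2, w3 + k * d3).
Proof. intros Hp Hn k. induction k using Z.peano_ind; intros w1 w2 w3 HW.
  - replace (w1 + 0 * d1, w2 + 0 * d2, w3 + 0 * d3) with (w1, w2, w3); auto. apply pt_eq; lia.
  - replace (w1 + Z.succ k * d1, w2 + Z.succ k * d2, w3 + Z.succ k * d3)
      with (w1 + k * d1 + d1, w2 + k * d2 + d2, w3 + k * d3 + d3) by (apply pt_eq; lia).
    apply Hp. auto.
  - replace (w1 + Z.pred k * d1, w2 + Z.pred k * d2, w3 + Z.pred k * d3)
      with (w1 + k * d1 - d1, w2 + k * d2 - d2, w3 + k * d3 - d3) by (apply pt_eq; lia).
    apply Hn. auto.
Qed.

Lemma Qp_isE_false m j a b c : 1 <= m -> Qp m j (a, b, c) -> isE m a b c -> False.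
Proof. intros Hm HQ [[-> [-> ->]]|[[-> [-> ->]]|[-> [-> ->]]]].
  exact (Qp_E1_false _ _ Hm HQ). exact (Qp_E2_false _ _ Hm HQ). exact (Qp_E3_false _ _ Hm HQ). Qed.

Lemma A2 m x p1 p2 p3 q1 q2 q3 k1 k2 k3 l1 l2 l3 : 1 <= m ->
  Sset m x (p1, p2, p3) -> Sset m x (q1, q2, q3) ->
  p1 + (3*m+6)*k1 = q1 + (3*m+6)*l1 -> p2 + (3*m+6)*k2 = q2 + (3*m+6)*l2 ->
  p3 + (3*m+6)*k3 = q3 + (3*m+6)*l3 ->
  (p1 = q1 /\ p2 = q2 /\ p3 = q3) /\ (k1 = l1 /\ k2 = l2 /\ k3 = l3).
Proof. intros Hm HP HQs G1 G2 G3.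
  destruct (Sset_elim _ _ _ _ _ HP) as [i [y1 [y2 [y3 [a [b [c [Hi [Ey [HQ [E1 [E2 E3]]]]]]]]]]]].
  destruct (Sset_elim _ _ _ _ _ HQs) as [j [z1 [z2 [z3 [a' [b' [c' [Hj [Ez [HQ' [E1' [E2' E3']]]]]]]]]]]].
  pose proof (Qp_bounds _ _ _ _ _ Hm HQ) as Hb.
  pose proof (Qp_bounds _ _ _ _ _ Hm HQ') as Hb'.
  destruct (coord (3*m+6) a a' (y1 + k1) (z1 + l1)) as [[? ?]|[[? ?]|[? ?]]]; try lia;
  destruct (coord (3*m+6) b b' (y2 + k2) (z2 + l2)) as [[? ?]|[[? ?]|[? ?]]]; try lia;
  destruct (coord (3*m+6) c c' (y3 + k3) (z3 + l3)) as [[? ?]|[[? ?]|[? ?]]]; try lia;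
  first [ exfalso; destruct (Qp_neg _ _ _ _ _ HQ ltac:(lia)) as [_ HB]; unfold isB in HB;
          apply (Qp_isE_false _ _ _ _ _ Hm HQ'); unfold isE; lia
        | exfalso; destruct (Qp_neg _ _ _ _ _ HQ' ltac:(lia)) as [_ HB]; unfold isB in HB;
          apply (Qp_isE_false _ _ _ _ _ Hm HQ); unfold isE; lia
        | idtac ].
  subst a' b' c'. pose proof (Qp_uniq _ _ _ _ HQ HQ') as Hij. subst j.
  rewrite Ey in Ez. apply pt_inj in Ez. lia.
Qed.

Lemma A1 m x : 1 <= m -> forall e1 e2 e3, exists a1 a2 a3 p1 p2 p3, Sset m x (p1, p2, p3) /\
  e1 = (3*m+6)*a1 + p1 /\ e2 = (3*m+6)*a2 + p2 /\ e3 = (3*m+6)*a3 + p3.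
Proof. intros Hm e1 e2 e3.
  assert (Hd1 := Z.div_mod e1 (3*m+6) ltac:(lia)); assert (Hr1 := Z.mod_pos_bound e1 (3*m+6) ltac:(lia)).
  assert (Hd2 := Z.div_mod e2 (3*m+6) ltac:(lia)); assert (Hr2 := Z.mod_pos_bound e2 (3*m+6) ltac:(lia)).
  assert (Hd3 := Z.div_mod e3 (3*m+6) ltac:(lia)); assert (Hr3 := Z.mod_pos_bound e3 (3*m+6) ltac:(lia)).
  remember (e1 / (3*m+6)) as t1; remember (e1 mod (3*m+6)) as r1.
  remember (e2 / (3*m+6)) as t2; remember (e2 mod (3*m+6)) as r2.
  remember (e3 / (3*m+6)) as t3; remember (e3 mod (3*m+6)) as r3.
  clear Heqt1 Heqr1 Heqt2 Heqr2 Heqt3 Heqr3.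
  destruct (classic (isE m r1 r2 r3)) as [HE|HE].
  - destruct (x 1) as [[y1 y2] y3] eqn:Ex. unfold isE in HE.
    destruct HE as [[-> [-> ->]]|[[-> [-> ->]]|[-> [-> ->]]]].
    + exists (t1 + 1 - y1), (t2 - y2), (t3 - y3), (-1 + (3*m+6)*y1), (1 + (3*m+6)*y2), (1 + (3*m+6)*y3).
      split; [|lia]. apply (Sset_at m x 1 y1 y2 y3 (-1) 1 1); auto; try lia. apply Qp_mk_B; unfold isB; lia.
    + exists (t1 - y1), (t2 + 1 - y2), (t3 - y3), (1 + (3*m+6)*y1), (-1 + (3*m+6)*y2), (1 + (3*m+6)*y3).
      split; [|lia]. apply (Sset_at m x 1 y1 y2 y3 1 (-1) 1); auto; try lia. apply Qp_mk_B; unfold isB; lia.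
    + exists (t1 - y1), (t2 - y2), (t3 + 1 - y3), (1 + (3*m+6)*y1), (1 + (3*m+6)*y2), (-1 + (3*m+6)*y3).
      split; [|lia]. apply (Sset_at m x 1 y1 y2 y3 1 1 (-1)); auto; try lia. apply Qp_mk_B; unfold isB; lia.
  - assert (Hq1 := Z.div_mod r1 3 ltac:(lia)); assert (Hc1 := Z.mod_pos_bound r1 3 ltac:(lia)).
    assert (Hq2 := Z.div_mod r2 3 ltac:(lia)); assert (Hc2 := Z.mod_pos_bound r2 3 ltac:(lia)).
    assert (Hq3 := Z.div_mod r3 3 ltac:(lia)); assert (Hc3 := Z.mod_pos_bound r3 3 ltac:(lia)).
    assert (Hbox : box m (r1 / 3, r2 / 3, r3 / 3)) by (cbv [box]; lia).
    pose proof (fval_range m _ Hm Hbox) as Hi.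
    remember (fval m (r1 / 3, r2 / 3, r3 / 3)) as i.
    destruct (x i) as [[y1 y2] y3] eqn:Ex.
    exists (t1 - y1), (t2 - y2), (t3 - y3), (r1 + (3*m+6)*y1), (r2 + (3*m+6)*y2), (r3 + (3*m+6)*y3).
    split; [|lia]. apply (Sset_at m x i y1 y2 y3 r1 r2 r3); auto; try lia.
    apply Qp_mk_Q3; [|intros _; exact HE].
    apply (Q3_mk m i (r1/3) (r2/3) (r3/3) (r1 mod 3) (r2 mod 3) (r3 mod 3)); auto; lia.
Qed.

Theorem main m x : 1 <= m ->
  tiles (Sset m x) Zcube (lattice (3 * m + 6)) /\
  (forall W : pt -> Prop, tiles (Sset m x) Zcube W ->
     exists t : pt, forall w, W w <-> exists v, lattice (3 * m + 6) v /\ w = padd t v).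
Proof. intros Hm. split.
  - split.
    + intros w1 w2 P1 P2 [[[a1 a2] a3] ->] [[[b1 b2] b3] ->] HP1 HP2 E.
      destruct P1 as [[p1 p2] p3], P2 as [[q1 q2] q3].
      cbv [padd pscale] in E. apply pt_inj in E.
      destruct (A2 m x p1 p2 p3 q1 q2 q3 a1 a2 a3 b1 b2 b3 Hm HP1 HP2) as [[? [? ?]] [? [? ?]]]; try lia.
      subst. split; reflexivity.
    + intros [[e1 e2] e3]. split; [intros _ | intros; exact I].
      destruct (A1 m x Hm e1 e2 e3) as [a1 [a2 [a3 [p1 [p2 [p3 [HS [? [? ?]]]]]]]]].
      exists (pscale (3*m+6) (a1, a2, a3)), (p1, p2, p3). split; [exists (a1, a2, a3); reflexivity|].
      split; auto. cbv [padd pscale]; apply pt_eq; lia.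
  - intros W [Hno Hcov].
    assert (Hno' : nonov (Sset m x) W) by exact Hno.
    assert (Hcov' : cov (Sset m x) W) by (intro e; exact (proj1 (Hcov e) I)).
    assert (Hs0 : exists s0, Sset m x s0).
    { destruct (A1 m x Hm 0 0 0) as [_ [_ [_ [p1 [p2 [p3 [HS _]]]]]]]. eauto. }
    assert (PX : forall w1 w2 w3, W (w1, w2, w3) -> W (w1 + (3*m+6), w2 + 0, w3 + 0))
      by (intros; rewrite !Z.add_0_r; apply (step_x m x W Hm Hno' Hcov'); auto).
    assert (PY : forall w1 w2 w3, W (w1, w2, w3) -> W (w1 + 0, w2 + (3*m+6), w3 + 0))
      by (intros; rewrite !Z.add_0_r; apply (step_y m x W Hm Hno' Hcov'); auto).
    assert (PZ : forall w1 w2 w3, W (w1, w2, w3) -> W (w1 + 0, w2 + 0, w3 + (3*m+6)))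
      by (intros; rewrite !Z.add_0_r; apply (step_z m x W Hm Hno' Hcov'); auto).
    pose proof (z_step W _ _ _ PX (neg_step _ W _ _ _ Hno' Hcov' Hs0 PX)) as ZX.
    pose proof (z_step W _ _ _ PY (neg_step _ W _ _ _ Hno' Hcov' Hs0 PY)) as ZY.
    pose proof (z_step W _ _ _ PZ (neg_step _ W _ _ _ Hno' Hcov' Hs0 PZ)) as ZZ.
    assert (Hall : forall w1 w2 w3 a b c, W (w1, w2, w3) ->
              W (w1 + (3*m+6)*a, w2 + (3*m+6)*b, w3 + (3*m+6)*c)).
    { intros w1 w2 w3 a b c HW.
      pose proof (ZX a _ _ _ HW) as H1.
      pose proof (ZY b _ _ _ H1) as H2.
      pose proof (ZZ c _ _ _ H2) as H3.
      replace (w1 + (3*m+6)*a, w2 + (3*m+6)*b, w3 + (3*m+6)*c) with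
        (w1 + a * (3 * m + 6) + b * 0 + c * 0, w2 + a * 0 + b * (3 * m + 6) + c * 0,
         w3 + a * 0 + b * 0 + c * (3 * m + 6)); auto. apply pt_eq; lia. }
    destruct (Hcov' (0, 0, 0)) as [[[w1 w2] w3] [_ [HW0 _]]].
    exists (w1, w2, w3). intros [[u1 u2] u3]. split.
    + intros HU. destruct Hs0 as [[[s1 s2] s3] HS0].
      destruct (A1 m x Hm (u1 + s1 - w1) (u2 + s2 - w2) (u3 + s3 - w3))
        as [a1 [a2 [a3 [p1 [p2 [p3 [HS [? [? ?]]]]]]]]].
      pose proof (Hall _ _ _ a1 a2 a3 HW0) as HWa.
      destruct (Hno' _ _ _ _ HU HWa HS0 HS) as [Eu _].
      { cbv [padd]; apply pt_eq; lia. }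
      exists (pscale (3*m+6) (a1, a2, a3)). split; [exists (a1, a2, a3); reflexivity|].
      rewrite Eu. reflexivity.
    + intros [v [[[[a1 a2] a3] ->] ->]]. cbv [padd pscale]. apply Hall; auto.
Qed.

Theorem lemma2p4 (l : Z) (x : Z -> pt) :
  2 <= l -> is_enum l x ->
  tiles (S_l l x) Zcube (lattice (3 * mval l + 6)) /\
  (forall W : pt -> Prop, tiles (S_l l x) Zcube W ->
     exists t : pt, forall w, W w <-> exists v, lattice (3 * mval l + 6) v /\ w = padd t v).
Proof. intros Hl _.
  assert (Hm : 1 <= mval l).
  { assert (E : mval l = 6 * ((l - 1) * (l - 1)) + 2) by (unfold mval; ring).
    rewrite E. nia. }
  exact (main (mval l) x Hm).
Qed.
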